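(* Let $S^0$ be a quasi-ideal adequate transversal of an abundant semigroup $S$. Then there exist a left adequate semigroup $L$ and a right adequate semigroup $R$ (namely the subsemigroups $L=\{x\in S:f_x=f_{\bar x}\}$ and $R=\{x\in S:e_x=e_{\bar x}\}$ of $S$) such that $S\cong T$, where $T=\{(x,a)\in L\times R:\bar x=\bar a\}$ with multiplication $(x,a)(y,b)=(e_xay,\,ayf_b)$ (products in $S$), and such that $T$ contains a quasi-ideal adequate transversal $T^0\cong S^0$.
   Context: For a semigroup $S$, $\mathcal{R}^\ast=\{(a,b): \text{for all } x,y\in S^1,\ xa=ya \iff xb=yb\}$ and $\mathcal{L}^\ast$ dually. $S$ is abundant if every $\mathcal{R}^\ast$-class and $\mathcal{L}^\ast$-class contains an idempotent; adequate if abundant with commuting idempotents; left (resp. right) adequate if abundant and every $\mathcal{R}^\ast$-class (resp. $\mathcal{L}^\ast$-class) contains a unique idempotent. In an adequate semigroup $a^+,a^\ast$ are the unique idempotents $\mathcal{R}^\ast$-, resp. $\mathcal{L}^\ast$-related to $a$. A subsemigroup $U$ of abundant $S$ is a $\ast$-subsemigroup if $U$ is abundant and $\mathcal{L}^\ast_U=\mathcal{L}^\ast_S\cap(U\times U)$, $\mathcal{R}^\ast_U=\mathcal{R}^\ast_S\cap(U\times U)$. An adequate $\ast$-subsemigroup $S^0$ of abundant $S$ is an adequate transversal if for each $x\in S$ there is a unique $\bar x\in S^0$ and idempotents $e,f$ of $S$ with $x=e\bar xf$, $e\,\mathcal{L}\,\bar x^+$, $f\,\mathcal{R}\,\bar x^\ast$;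 these $e,f$ are unique and denoted $e_x,f_x$. It is a quasi-ideal adequate transversal if moreover $S^0SS^0\subseteq S^0$. *)

(* Defs.v *)
(* Semigroups are given by a carrier type X, a binary operation
   m, and a predicate U : X -> Prop selecting the (sub)semigroup. *)
From Stdlib Require Import ClassicalEpsilon.

Set Implicit Arguments.

Section SG.
Variable X : Type.
Variable U : X -> Prop.
Variable m : X -> X -> X.

Definition semigroup : Prop :=
  (forall a b, U a -> U b -> U (m a b)) /\
  (forall a b c, U a -> U b -> U c -> m a (m b c) = m (m a b) c).

Definition idem (e : X) : Prop := U e /\ m e e = e.

(* elements of U^1 : None is the adjoined identity *)
Definition in1 (o : option X) : Prop :=
  match o with None => True | Some x => U x end.
Definition lact (o : option X) (a : X) : X :=
  match o with None => a | Some x => m x a end.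
Definition ract (a : X) (o : option X) : X :=
  match o with None => a | Some x => m a x end.

Definition Rstar (a b : X) : Prop :=
  forall x y, in1 x -> in1 y -> (lact x a = lact y a <-> lact x b = lact y b).
Definition Lstar (a b : X) : Prop :=
  forall x y, in1 x -> in1 y -> (ract a x = ract a y <-> ract b x = ract b y).

Definition abundant : Prop :=
  forall a, U a ->
    (exists e, idem e /\ Rstar e a) /\ (exists f, idem f /\ Lstar f a).

Definition adequate : Prop :=
  abundant /\ forall e f, idem e -> idem f -> m e f = m f e.

Definition left_adequate : Prop :=
  abundant /\ forall a e f, U a -> idem e -> idem f -> Rstar e a -> Rstar f a -> e = f.

Definition right_adequate : Prop :=
  abundant /\ forall a e f, U a -> idem e -> idem f -> Lstar e a -> Lstar f a -> e = f.

(* Green's relations: a L b iff U^1 a = U^1 b ; a R b iff a U^1 = b U^1 *)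
Definition GreenL (a b : X) : Prop :=
  exists u v, in1 u /\ in1 v /\ lact u a = b /\ lact v b = a.
Definition GreenR (a b : X) : Prop :=
  exists u v, in1 u /\ in1 v /\ ract a u = b /\ ract b v = a.

Definition iso (Y : Type) (V : Y -> Prop) (n : Y -> Y -> Y) (phi : X -> Y) : Prop :=
  (forall x, U x -> V (phi x)) /\
  (forall x y, U x -> U y -> phi x = phi y -> x = y) /\
  (forall z, V z -> exists x, U x /\ phi x = z) /\
  (forall x y, U x -> U y -> phi (m x y) = n (phi x) (phi y)).
End SG.

Section Trans.
Variable X : Type.
Variable U : X -> Prop.
Variable m : X -> X -> X.

Definition star_sub (V : X -> Prop) : Prop :=
  (forall x, V x -> U x) /\ semigroup V m /\ abundant V m /\
  (forall a b, V a -> V b -> (Lstar V m a b <-> Lstar U m a b)) /\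
  (forall a b, V a -> V b -> (Rstar V m a b <-> Rstar U m a b)).

(* x = e xb f with xb in S0, e,f idempotents of U, e L xb^+, f R xb^*,
   where xb^+ (resp. xb^* ) is the idempotent of S0 that is R*- (resp. L*-)
   related to xb in S0 *)
Definition decomp (S0 : X -> Prop) (x xb e f : X) : Prop :=
  S0 xb /\ idem U m e /\ idem U m f /\ x = m (m e xb) f /\
  (exists p, idem S0 m p /\ Rstar S0 m p xb /\ GreenL U m e p) /\
  (exists q, idem S0 m q /\ Lstar S0 m q xb /\ GreenR U m f q).

Definition adequate_transversal (S0 : X -> Prop) : Prop :=
  semigroup U m /\ abundant U m /\ star_sub S0 /\ adequate S0 m /\
  forall x, U x -> exists! xb, exists e f, decomp S0 x xb e f.

Definition qi_adequate_transversal (S0 : X -> Prop) : Prop :=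
  adequate_transversal S0 /\
  forall a s b, S0 a -> U s -> S0 b -> S0 (m (m a s) b).

(* the (unique) decomposition ((xbar, e_x), f_x), chosen by epsilon *)
Definition dec (S0 : X -> Prop) (x : X) : X * X * X :=
  epsilon (inhabits (x, x, x))
    (fun t => decomp S0 x (fst (fst t)) (snd (fst t)) (snd t)).
Definition bar S0 x := fst (fst (dec S0 x)).
Definition ee S0 x := snd (fst (dec S0 x)).
Definition ff S0 x := snd (dec S0 x).

Definition Lset S0 (x : X) : Prop := U x /\ ff S0 x = ff S0 (bar S0 x).
Definition Rset S0 (x : X) : Prop := U x /\ ee S0 x = ee S0 (bar S0 x).
Definition Tset S0 (p : X * X) : Prop :=
  Lset S0 (fst p) /\ Rset S0 (snd p) /\ bar S0 (fst p) = bar S0 (snd p).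
Definition mulT S0 (p q : X * X) : X * X :=
  (m (m (ee S0 (fst p)) (snd p)) (fst q), m (m (snd p) (fst q)) (ff S0 (snd q))).
End Trans.

(* Main.v *)
Require Import Defs.
From Stdlib Require Import ClassicalEpsilon.
Set Implicit Arguments.

Section A.
Variables (X : Type) (m : X -> X -> X) (S0 : X -> Prop).
Hypothesis HS0 : qi_adequate_transversal (fun _ => True) m S0.
Notation TT := (fun _ : X => True).

Lemma assoc a b c : m a (m b c) = m (m a b) c.
Proof. destruct HS0 as [[[_ H] _] _]. apply H; exact I. Qed.

Lemma S0mul a b : S0 a -> S0 b -> S0 (m a b).
Proof. destruct HS0 as [[_ [_ [[_ [[H _] _]] _]]] _]. apply H. Qed.

Lemma qi a s b : S0 a -> S0 b -> S0 (m (m a s) b).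
Proof. destruct HS0 as [_ H]. intros; apply H; auto. Qed.

Lemma S0abund a : S0 a -> (exists p, idem S0 m p /\ Rstar S0 m p a) /\
   (exists q, idem S0 m q /\ Lstar S0 m q a).
Proof. destruct HS0 as [[_ [_ [[_ [_ [H _]]] _]]] _]. apply H. Qed.

Lemma comm e f : idem S0 m e -> idem S0 m f -> m e f = m f e.
Proof. destruct HS0 as [[_ [_ [_ [[_ H] _]]]] _]. apply H. Qed.

Lemma RS0T a b : S0 a -> S0 b -> Rstar S0 m a b -> Rstar TT m a b.
Proof. destruct HS0 as [[_ [_ [[_ [_ [_ [_ H]]]] _]]] _]. intros; apply H; auto. Qed.
Lemma LS0T a b : S0 a -> S0 b -> Lstar S0 m a b -> Lstar TT m a b.
Proof. destruct HS0 as [[_ [_ [[_ [_ [_ [H _]]]] _]]] _]. intros; apply H; auto. Qed.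

Lemma uniqd x : exists! xb, exists e f, decomp TT m S0 x xb e f.
Proof. destruct HS0 as [[_ [_ [_ [_ H]]]] _]. apply H; exact I. Qed.

Definition pl a := epsilon (inhabits a) (fun p => idem S0 m p /\ Rstar S0 m p a).
Definition st a := epsilon (inhabits a) (fun p => idem S0 m p /\ Lstar S0 m p a).

Lemma pl_spec a : S0 a -> idem S0 m (pl a) /\ Rstar S0 m (pl a) a.
Proof. intro Ha. unfold pl. apply epsilon_spec. apply (S0abund Ha). Qed.
Lemma st_spec a : S0 a -> idem S0 m (st a) /\ Lstar S0 m (st a) a.
Proof. intro Ha. unfold st. apply epsilon_spec. apply (S0abund Ha). Qed.

Lemma pl_S0 a : S0 a -> S0 (pl a).
Proof. intro H; apply (pl_spec H). Qed.
Lemma st_S0 a : S0 a -> S0 (st a).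
Proof. intro H; apply (st_spec H). Qed.
Lemma pl_id a : S0 a -> m (pl a) (pl a) = pl a.
Proof. intro H; apply (pl_spec H). Qed.
Lemma st_id a : S0 a -> m (st a) (st a) = st a.
Proof. intro H; apply (st_spec H). Qed.

Lemma pl_l a : S0 a -> m (pl a) a = a.
Proof. intro H. destruct (pl_spec H) as [[H1 H2] H3].
  specialize (H3 None (Some (pl a)) I H1). simpl in H3. symmetry; apply H3; auto. Qed.
Lemma st_r a : S0 a -> m a (st a) = a.
Proof. intro H. destruct (st_spec H) as [[H1 H2] H3].
  specialize (H3 None (Some (st a)) I H1). simpl in H3. symmetry; apply H3; auto. Qed.
Lemma pl_max a q : S0 a -> S0 q -> m q a = a -> m q (pl a) = pl a.
Proof. intros H Hq E. destruct (pl_spec H) as [[H1 H2] H3].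
  specialize (H3 (Some q) None Hq I). simpl in H3. apply H3; auto. Qed.
Lemma st_max a q : S0 a -> S0 q -> m a q = a -> m (st a) q = st a.
Proof. intros H Hq E. destruct (st_spec H) as [[H1 H2] H3].
  specialize (H3 (Some q) None Hq I). simpl in H3. apply H3; auto. Qed.

Lemma pl_le a q : S0 a -> idem S0 m q -> m q a = a -> m (pl a) q = pl a /\ m q (pl a) = pl a.
Proof. intros H [Hq Hq'] E. assert (E2 := pl_max H Hq E). split; auto.
  rewrite comm; auto. apply (pl_spec H). split; auto. Qed.
Lemma st_le a q : S0 a -> idem S0 m q -> m a q = a -> m (st a) q = st a /\ m q (st a) = st a.
Proof. intros H [Hq Hq'] E. assert (E2 := st_max H Hq E). split; auto.
  rewrite <- comm; auto. apply (st_spec H). split; auto. Qed.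

Lemma pl_idemp p : S0 p -> m p p = p -> pl p = p.
Proof. intros H E. destruct (pl_le H (conj H E) E) as [E1 E2].
  destruct (pl_spec H) as [[_ _] H3].
  assert (E3 := pl_max H (pl_S0 H) (pl_l H)).
  specialize (H3 None (Some p) I H). simpl in H3.
  assert (m (pl p) p = pl p). { rewrite comm; auto. apply (pl_spec H). split; auto. }
  rewrite <- H0. apply pl_l; auto. Qed.
Lemma st_idemp p : S0 p -> m p p = p -> st p = p.
Proof. intros H E. destruct (st_le H (conj H E) E) as [E1 E2].
  rewrite <- E2. apply st_r; auto. Qed.

Lemma RT a u v : S0 a -> m u a = m v a -> m u (pl a) = m v (pl a).
Proof. intros H E. assert (R := RS0T (pl_S0 H) H (proj2 (pl_spec H))).
  specialize (R (Some u) (Some v) I I). simpl in R. apply R; auto. Qed.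
Lemma LT a u v : S0 a -> m a u = m a v -> m (st a) u = m (st a) v.
Proof. intros H E. assert (R := LS0T (st_S0 H) H (proj2 (st_spec H))).
  specialize (R (Some u) (Some v) I I). simpl in R. apply R; auto. Qed.

Definition D x b e f := S0 b /\ m e e = e /\ m f f = f /\ x = m (m e b) f /\
  m e (pl b) = e /\ m (pl b) e = pl b /\ m f (st b) = st b /\ m (st b) f = f.

Lemma GL_iff e p : m e e = e -> m p p = p -> (GreenL TT m e p <-> m e p = e /\ m p e = p).
Proof. intros He Hp. split.
- intros [u [v [_ [_ [E1 E2]]]]]. split.
  + destruct v as [v|]; simpl in E2.
    * rewrite <- E2, <- assoc, Hp; auto.
    * rewrite E2; auto.
  + destruct u as [u|]; simpl in E1.
    * rewrite <- E1, <- assoc, He; auto.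
    * rewrite <- E1; auto.
- intros [E1 E2]. exists (Some p), (Some e). simpl; auto.
Qed.
Lemma GR_iff f q : m f f = f -> m q q = q -> (GreenR TT m f q <-> m f q = q /\ m q f = f).
Proof. intros He Hp. split.
- intros [u [v [_ [_ [E1 E2]]]]]. split.
  + destruct u as [u|]; simpl in E1.
    * rewrite <- E1, assoc, He; auto.
    * rewrite <- E1; auto.
  + destruct v as [v|]; simpl in E2.
    * rewrite <- E2, assoc, Hp; auto.
    * rewrite E2; auto.
- intros [E1 E2]. exists (Some q), (Some f). simpl; auto.
Qed.

Lemma decomp_iff x b e f : decomp TT m S0 x b e f <-> D x b e f.
Proof. split.
- intros [Hb [[_ He] [[_ Hf] [Hx [[p [Hp [Rp Gp]]] [q [Hq [Lq Gq]]]]]]]].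
  assert (p = pl b). { destruct Hp as [Hp Hp'].
    assert (E0 : m p b = b) by (symmetry; apply (Rp None (Some p) I Hp); simpl; auto).
    assert (E1 := pl_max Hb Hp E0).
    assert (E2 : m (pl b) p = p) by (apply (Rp (Some (pl b)) None (pl_S0 Hb) I); simpl; apply pl_l; auto).
    rewrite comm in E1; [congruence | split; auto | apply pl_spec; auto]. }
  assert (q = st b). { destruct Hq as [Hq Hq'].
    assert (E0 : m b q = b) by (symmetry; apply (Lq None (Some q) I Hq); simpl; auto).
    destruct (st_le Hb (conj Hq Hq') E0) as [E1 E2].
    assert (E3 : m q (st b) = q).
    { apply (Lq (Some (st b)) None (st_S0 Hb) I); simpl. apply st_r; auto. }
    congruence. }
  subst p q. apply GL_iff in Gp; auto. apply GR_iff in Gq; auto.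
  unfold D; tauto. apply st_id; auto. apply pl_id; auto.
- intros [Hb [He [Hf [Hx [E1 [E2 [E3 E4]]]]]]].
  split; auto. split. split; auto. split. split; auto. split; auto.
  split.
  + exists (pl b). split. apply pl_spec; auto. split. apply pl_spec; auto.
    apply GL_iff; auto. apply pl_id; auto.
  + exists (st b). split. apply st_spec; auto. split. apply st_spec; auto.
    apply GR_iff; auto. apply st_id; auto.
Qed.

Notation barx := (bar TT m S0).
Notation eex := (ee TT m S0).
Notation ffx := (ff TT m S0).

Lemma dec_D x : D x (barx x) (eex x) (ffx x).
Proof. apply decomp_iff. unfold bar, ee, ff, dec.
  apply (epsilon_spec (inhabits (x,x,x))
     (fun t => decomp TT m S0 x (fst (fst t)) (snd (fst t)) (snd t))).
  destruct (uniqd x) as [b [[e [f H]] _]]. exists (b,e,f). exact H. Qed.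

Lemma D_uniq x b e f b' e' f' : D x b e f -> D x b' e' f' -> b = b' /\ e = e' /\ f = f'.
Proof. intros H1 H2.
  assert (b = b').
  { destruct (uniqd x) as [b0 [_ U]].
    rewrite <- (U b), <- (U b'); auto; [exists e', f' | exists e, f]; apply decomp_iff; auto. }
  subst b'. split; auto.
  destruct H1 as [Hb [He [Hf [Hx [E1 [E2 [E3 E4]]]]]]].
  destruct H2 as [_ [He' [Hf' [Hx' [E1' [E2' [E3' E4']]]]]]].
  assert (Hbq : m b (st b) = b) by (apply st_r; auto).
  assert (Hpb : m (pl b) b = b) by (apply pl_l; auto).
  split.
  - assert (F1 : m e' e = e').
    { rewrite <- E1' at 1. rewrite <- assoc, E2. auto. }
    assert (F2 : m e' x = x) by (rewrite Hx' at 1; rewrite !assoc, He'; auto).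
    rewrite Hx in F2. rewrite !assoc, F1 in F2.
    assert (F3 : m (m e' b) (m f (st b)) = m (m e b) (m f (st b))) by (rewrite !assoc; congruence).
    rewrite E3, <- !assoc, Hbq in F3.
    assert (F4 := RT Hb F3). rewrite E1, E1' in F4. congruence.
  - assert (F1 : m f f' = f').
    { rewrite <- E4' at 1. rewrite assoc, E3. auto. }
    assert (F2 : m x f' = x) by (rewrite Hx' at 1; rewrite <- !assoc, Hf'; rewrite !assoc; auto).
    rewrite Hx in F2. rewrite <- !assoc, F1 in F2.
    assert (F3 : m (m (pl b) e) (m b f') = m (m (pl b) e) (m b f)) by (rewrite <- !assoc, F2; auto).
    rewrite E2, !assoc, Hpb in F3.
    assert (F4 := LT Hb F3). rewrite E4, E4' in F4. congruence.
Qed.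

Lemma D_bar x b e f : D x b e f -> barx x = b /\ eex x = e /\ ffx x = f.
Proof. intro H. destruct (D_uniq (dec_D x) H) as [A [B C]]. auto. Qed.

Lemma D_S0 a : S0 a -> D a a (pl a) (st a).
Proof. intro H. unfold D. repeat split; auto using pl_id, st_id.
  rewrite pl_l, st_r; auto. Qed.

Lemma bar_S0 a : S0 a -> barx a = a /\ eex a = pl a /\ ffx a = st a.
Proof. intro H. apply D_bar, D_S0; auto. Qed.

Lemma barS0 x : S0 (barx x).
Proof. apply (dec_D x). Qed.

Lemma D_mul x b e f y c g h w : D x b e f -> D y c g h -> w = m (m b (m f g)) c ->
  D (m x y) w (m e (pl w)) (m (st w) h).
Proof. intros H1 H2 Hw.
  destruct H1 as [Hb [He [Hf [Hx [E1 [E2 [E3 E4]]]]]]].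
  destruct H2 as [Hc [Hg [Hh [Hy [G1 [G2 [G3 G4]]]]]]].
  assert (Sw : S0 w) by (rewrite Hw; apply qi; auto).
  assert (P1 : m (pl b) w = w) by (rewrite Hw, !assoc, pl_l; auto).
  assert (P2 : m w (st c) = w) by (rewrite Hw, <- !assoc, st_r; auto).
  assert (Ipb : idem S0 m (pl b)) by (apply pl_spec; auto).
  assert (Isc : idem S0 m (st c)) by (apply st_spec; auto).
  destruct (pl_le Sw Ipb P1) as [Q1 Q2].
  destruct (st_le Sw Isc P2) as [Q3 Q4].
  assert (Wp : m (pl w) e = pl w) by (rewrite <- Q1, <- assoc, E2; auto).
  assert (Wq : m h (st w) = st w) by (rewrite <- Q4, assoc, G3; auto).
  unfold D. repeat split; auto.
  - rewrite <- !assoc, (assoc (pl w) e), Wp, pl_id; auto.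
  - rewrite <- !assoc, (assoc h (st w)), Wq, assoc, st_id; auto.
  - rewrite <- (assoc e (pl w) w), pl_l; auto. rewrite (assoc (m e w) (st w) h).
    rewrite <- (assoc e w (st w)), st_r; auto. rewrite Hx, Hy, Hw. rewrite !assoc. auto.
  - rewrite <- assoc, pl_id; auto.
  - rewrite assoc, Wp, pl_id; auto.
  - rewrite <- assoc, Wq, st_id; auto.
  - rewrite assoc, st_id; auto.
Qed.

Lemma D_left e b : S0 b -> m e e = e -> m e (pl b) = e -> m (pl b) e = pl b ->
  D (m e b) b e (st b).
Proof. intros Hb He E1 E2. unfold D; repeat split; auto using st_id.
  rewrite <- assoc, st_r; auto. Qed.
Lemma D_right b f : S0 b -> m f f = f -> m f (st b) = st b -> m (st b) f = f ->
  D (m b f) b (pl b) f.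
Proof. intros Hb He E1 E2. unfold D; repeat split; auto using pl_id.
  rewrite pl_l; auto. Qed.

Lemma lact_m (u : option X) a c : lact m u (m a c) = m (lact m u a) c.
Proof. destruct u; simpl; auto using assoc. Qed.
Lemma ract_m (u : option X) a c : ract m (m a c) u = m a (ract m c u).
Proof. destruct u; simpl; auto. symmetry; apply assoc. Qed.

Lemma R_ee x : Rstar TT m (eex x) x.
Proof. destruct (dec_D x) as [Hb [He [Hf [Hx [E1 [E2 [E3 E4]]]]]]].
  set (b := barx x) in *. set (e := eex x) in *. set (f := ffx x) in *.
  intros u v _ _. split; intro E.
  - rewrite Hx, !lact_m, E; auto.
  - rewrite Hx, !lact_m in E.
    assert (E' : m (m (lact m u e) b) (m f (st b)) = m (m (lact m v e) b) (m f (st b)))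
      by (rewrite !assoc, E; auto).
    rewrite E3, <- !assoc, st_r in E'; auto.
    assert (R := RS0T (pl_S0 Hb) Hb (proj2 (pl_spec Hb)) (Some (lact m u e)) (Some (lact m v e)) I I).
    simpl in R. apply R in E'. rewrite <- !lact_m, E1 in E'. auto.
Qed.
Lemma L_ff x : Lstar TT m (ffx x) x.
Proof. destruct (dec_D x) as [Hb [He [Hf [Hx [E1 [E2 [E3 E4]]]]]]].
  set (b := barx x) in *. set (e := eex x) in *. set (f := ffx x) in *.
  intros u v _ _. split; intro E.
  - rewrite Hx, !ract_m, E; auto.
  - rewrite Hx, !ract_m in E.
    assert (E' : m (m (pl b) e) (m b (ract m f u)) = m (m (pl b) e) (m b (ract m f v)))
      by (rewrite <- !assoc in E |- *; rewrite E; auto).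
    rewrite E2, assoc, pl_l in E'; auto. rewrite assoc, pl_l in E'; auto.
    assert (R := LS0T (st_S0 Hb) Hb (proj2 (st_spec Hb)) (Some (ract m f u)) (Some (ract m f v)) I I).
    simpl in R. apply R in E'. rewrite <- !ract_m, E4 in E'. auto.
Qed.

Lemma Lset_iff x : Lset TT m S0 x <-> ffx x = st (barx x).
Proof. unfold Lset. rewrite (proj2 (proj2 (bar_S0 (barS0 x)))). tauto. Qed.
Lemma Rset_iff x : Rset TT m S0 x <-> eex x = pl (barx x).
Proof. unfold Rset. rewrite (proj1 (proj2 (bar_S0 (barS0 x)))). tauto. Qed.

Lemma S0_L a : S0 a -> Lset TT m S0 a.
Proof. intro H. apply Lset_iff. destruct (bar_S0 H) as [A [B C]]. rewrite A, C; auto. Qed.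
Lemma S0_R a : S0 a -> Rset TT m S0 a.
Proof. intro H. apply Rset_iff. destruct (bar_S0 H) as [A [B C]]. rewrite A, B; auto. Qed.

Lemma w_le b s c : S0 b -> S0 c ->
  m (pl (m (m b s) c)) (pl b) = pl (m (m b s) c) /\ m (pl b) (pl (m (m b s) c)) = pl (m (m b s) c) /\
  m (st (m (m b s) c)) (st c) = st (m (m b s) c) /\ m (st c) (st (m (m b s) c)) = st (m (m b s) c).
Proof. intros Hb Hc. assert (Sw : S0 (m (m b s) c)) by (apply qi; auto).
  destruct (pl_le Sw (proj1 (pl_spec Hb)) (ltac:(rewrite !assoc, pl_l; auto))).
  destruct (st_le Sw (proj1 (st_spec Hc)) (ltac:(rewrite <- !assoc, st_r; auto))). auto. Qed.

Lemma Rstar_TT V a b : Rstar TT m a b -> Rstar V m a b.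
Proof. intros H u v _ _. apply H; [destruct u|destruct v]; simpl; auto. Qed.
Lemma Lstar_TT V a b : Lstar TT m a b -> Lstar V m a b.
Proof. intros H u v _ _. apply H; [destruct u|destruct v]; simpl; auto. Qed.

Lemma ee_id x : m (eex x) (eex x) = eex x.
Proof. apply (dec_D x). Qed.
Lemma ff_id x : m (ffx x) (ffx x) = ffx x.
Proof. apply (dec_D x). Qed.

Lemma L_mul x y : Lset TT m S0 x -> Lset TT m S0 y -> Lset TT m S0 (m x y).
Proof. intros _ Hy. apply Lset_iff in Hy. apply Lset_iff.
  assert (H := D_mul (dec_D x) (dec_D y) eq_refl).
  destruct (D_bar H) as [A [_ C]]. rewrite A, C, Hy.
  apply (w_le _ (barS0 x) (barS0 y)). Qed.

Lemma L_ee x : Lset TT m S0 (eex x).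
Proof. apply Lset_iff. destruct (dec_D x) as [Hb [He [_ [_ [E1 [E2 _]]]]]].
  assert (H := D_left (pl_S0 Hb) He).
  rewrite pl_idemp in H; auto using pl_S0, pl_id. specialize (H E1 E2). rewrite E1 in H.
  destruct (D_bar H) as [A [_ C]]. rewrite A, C. auto. Qed.

Lemma L_idem g : Lset TT m S0 g -> m g g = g ->
  m (barx g) (barx g) = barx g /\ eex g = g /\ m g (barx g) = g /\ m (barx g) g = barx g.
Proof. intros HL Hg. apply Lset_iff in HL.
  destruct (dec_D g) as [Hb [He [_ [Hx [E1 [E2 [E3 E4]]]]]]].
  set (b := barx g) in *. set (e := eex g) in *. rewrite HL in Hx.
  assert (Sq := st_S0 Hb). assert (Iq := st_id Hb).
  rewrite <- assoc, st_r in Hx; auto.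
  assert (Bb : m b (m e b) = b).
  { assert (K : m (pl b) (m g g) = m (pl b) g) by (rewrite Hg; auto).
    rewrite Hx in K. rewrite !assoc, E2, pl_l in K; auto. rewrite <- !assoc in K. exact K. }
  assert (Qg : m (st b) g = st b).
  { rewrite Hx. transitivity (m (st b) (st b)); auto. apply LT; auto. rewrite Bb, st_r; auto. }
  assert (Gq : m g (st b) = g) by (rewrite Hx, <- assoc, st_r; auto).
  assert (H : D g (st b) g (st b)).
  { unfold D. rewrite (pl_idemp Sq Iq), (st_idemp Sq Iq). repeat split; auto.
    rewrite Gq, Gq; auto. }
  destruct (D_uniq (dec_D g) H) as [A [B _]]. fold b in A. fold e in B.
  rewrite A. repeat split; auto. Qed.

Lemma L_left_adequate : semigroup (Lset TT m S0) m /\ left_adequate (Lset TT m S0) m.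
Proof. split; [split|split].
- apply L_mul.
- intros; apply assoc.
- intros a Ha. split.
  + exists (eex a). split. split. apply L_ee. apply ee_id. apply Rstar_TT, R_ee.
  + exists (ffx a). split. split.
    * assert (Hf : ffx a = st (barx a)).
      { apply Lset_iff; auto. }
      rewrite Hf. apply S0_L, st_S0, barS0.
    * apply ff_id.
    * apply Lstar_TT, L_ff.
- intros a e f Ha [He He'] [Hf Hf'] Re Rf.
  assert (F1 : m f a = a) by (symmetry; apply (Rf None (Some f) I Hf); simpl; auto).
  assert (F2 : m e a = a) by (symmetry; apply (Re None (Some e) I He); simpl; auto).
  assert (Fe : m f e = e) by (apply (Re (Some f) None Hf I); simpl; auto).
  assert (Ef : m e f = f) by (apply (Rf (Some e) None He I); simpl; auto).
  destruct (L_idem He He') as [Ip [Ep [Ep1 Ep2]]].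
  destruct (L_idem Hf Hf') as [Iq [Eq [Eq1 Eq2]]].
  assert (Sp := barS0 e). assert (Sq := barS0 f).
  set (p := barx e) in *. set (q := barx f) in *.
  assert (De : D e p e p).
  { assert (H := dec_D e). rewrite (proj1 (Lset_iff e) He) in H. fold p in H. rewrite Ep in H.
    rewrite st_idemp in H; auto. }
  assert (Df : D f q f q).
  { assert (H := dec_D f). rewrite (proj1 (Lset_iff f) Hf) in H. fold q in H. rewrite Eq in H.
    rewrite st_idemp in H; auto. }
  assert (W1 : p = m (m q (m q e)) p).
  { assert (H := D_mul Df De eq_refl). rewrite Fe in H. apply (D_uniq De H). }
  assert (W2 : q = m (m p (m p f)) q).
  { assert (H := D_mul De Df eq_refl). rewrite Ef in H. apply (D_uniq Df H). }
  rewrite !assoc, Iq, <- assoc, Ep1 in W1.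
  rewrite !assoc, Ip, <- assoc, Eq1 in W2.
  assert (P1 : m q p = p) by (rewrite W1 at 1; rewrite assoc, Iq; congruence).
  assert (P2 : m p q = q) by (rewrite W2 at 1; rewrite assoc, Ip; congruence).
  assert (pq : p = q).
  { rewrite <- P1 at 1. rewrite comm; [exact P2|split;auto|split;auto]. }
  assert (K : m e f = e). { rewrite <- Ep1 at 1. rewrite <- assoc, pq, Eq2, <- pq, Ep1; auto. }
  congruence.
Qed.

Lemma R_mul x y : Rset TT m S0 x -> Rset TT m S0 y -> Rset TT m S0 (m x y).
Proof. intros Hx _. apply Rset_iff in Hx. apply Rset_iff.
  assert (H := D_mul (dec_D x) (dec_D y) eq_refl).
  destruct (D_bar H) as [A [B _]]. rewrite A, B, Hx.
  apply (w_le _ (barS0 x) (barS0 y)). Qed.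

Lemma R_ff x : Rset TT m S0 (ffx x).
Proof. apply Rset_iff. destruct (dec_D x) as [Hb [_ [Hf [_ [_ [_ [E3 E4]]]]]]].
  assert (H := D_right (st_S0 Hb) Hf).
  rewrite st_idemp in H; auto using st_S0, st_id. specialize (H E3 E4). rewrite E4 in H.
  rewrite pl_idemp in H; auto using st_S0, st_id.
  destruct (D_bar H) as [A [B _]]. rewrite A, B. rewrite pl_idemp; auto using st_S0, st_id. Qed.

Lemma R_idem g : Rset TT m S0 g -> m g g = g ->
  m (barx g) (barx g) = barx g /\ ffx g = g /\ m (barx g) g = g /\ m g (barx g) = barx g.
Proof. intros HR Hg. apply Rset_iff in HR.
  destruct (dec_D g) as [Hb [_ [Hf [Hx [E1 [E2 [E3 E4]]]]]]].
  set (b := barx g) in *. set (f := ffx g) in *. rewrite HR in Hx.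
  assert (Sp := pl_S0 Hb). assert (Ip := pl_id Hb).
  rewrite pl_l in Hx; auto.
  assert (Bb : m (m b f) b = b).
  { assert (K : m (m g g) (st b) = m g (st b)) by (rewrite Hg; auto).
    rewrite Hx in K. rewrite <- !assoc, E3, st_r in K; auto. rewrite !assoc in K. exact K. }
  assert (Gp : m g (pl b) = pl b).
  { rewrite Hx. transitivity (m (pl b) (pl b)); auto. apply RT; auto. rewrite Bb, pl_l; auto. }
  assert (Pg : m (pl b) g = g) by (rewrite Hx, assoc, pl_l; auto).
  assert (H : D g (pl b) (pl b) g).
  { unfold D. rewrite (pl_idemp Sp Ip), (st_idemp Sp Ip). repeat split; auto.
    rewrite Ip, Pg; auto. }
  destruct (D_uniq (dec_D g) H) as [A [_ C]]. fold b in A. fold f in C.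
  rewrite A. repeat split; auto. Qed.

Lemma R_right_adequate : semigroup (Rset TT m S0) m /\ right_adequate (Rset TT m S0) m.
Proof. split; [split|split].
- apply R_mul.
- intros; apply assoc.
- intros a Ha. split.
  + exists (eex a). split. split.
    * assert (Hf : eex a = pl (barx a)).
      { apply Rset_iff; auto. }
      rewrite Hf. apply S0_R, pl_S0, barS0.
    * apply ee_id.
    * apply Rstar_TT, R_ee.
  + exists (ffx a). split. split. apply R_ff. apply ff_id. apply Lstar_TT, L_ff.
- intros a e f Ha [He He'] [Hf Hf'] Re Rf.
  assert (F1 : m a f = a) by (symmetry; apply (Rf None (Some f) I Hf); simpl; auto).
  assert (F2 : m a e = a) by (symmetry; apply (Re None (Some e) I He); simpl; auto).
  assert (Fe : m f e = f) by (apply (Rf (Some e) None He I); simpl; auto).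
  assert (Ef : m e f = e) by (apply (Re (Some f) None Hf I); simpl; auto).
  destruct (R_idem He He') as [Ip [Ep [Ep1 Ep2]]].
  destruct (R_idem Hf Hf') as [Iq [Eq [Eq1 Eq2]]].
  assert (Sp := barS0 e). assert (Sq := barS0 f).
  set (p := barx e) in *. set (q := barx f) in *.
  assert (De : D e p p e).
  { assert (H := dec_D e). rewrite (proj1 (Rset_iff e) He) in H. fold p in H. rewrite Ep in H.
    rewrite pl_idemp in H; auto. }
  assert (Df : D f q q f).
  { assert (H := dec_D f). rewrite (proj1 (Rset_iff f) Hf) in H. fold q in H. rewrite Eq in H.
    rewrite pl_idemp in H; auto. }
  assert (W1 : p = m (m p (m e q)) q).
  { assert (H := D_mul De Df eq_refl). rewrite Ef in H. apply (D_uniq De H). }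
  assert (W2 : q = m (m q (m f p)) p).
  { assert (H := D_mul Df De eq_refl). rewrite Fe in H. apply (D_uniq Df H). }
  rewrite !assoc, Ep1, <- assoc, Iq in W1.
  rewrite !assoc, Eq1, <- assoc, Ip in W2.
  assert (P1 : m p q = p) by (rewrite W1 at 1; rewrite <- assoc, Iq; congruence).
  assert (P2 : m q p = q) by (rewrite W2 at 1; rewrite <- assoc, Ip; congruence).
  assert (pq : p = q).
  { rewrite <- P1 at 1. rewrite comm; [exact P2|split;auto|split;auto]. }
  assert (K : m f e = e). { rewrite <- Ep1 at 1. rewrite assoc, pq, Eq2, <- pq, Ep1; auto. }
  congruence.
Qed.

Definition phi x := (m (eex x) (barx x), m (barx x) (ffx x)).

Lemma phi1_D x : D (m (eex x) (barx x)) (barx x) (eex x) (st (barx x)).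
Proof. destruct (dec_D x) as [Hb [He [_ [_ [E1 [E2 _]]]]]]. apply D_left; auto. Qed.
Lemma phi2_D x : D (m (barx x) (ffx x)) (barx x) (pl (barx x)) (ffx x).
Proof. destruct (dec_D x) as [Hb [_ [Hf [_ [_ [_ [E3 E4]]]]]]]. apply D_right; auto. Qed.

Lemma phi_iso : iso TT m (Tset TT m S0) (mulT TT m S0) phi.
Proof. split; [|split; [|split]].
- intros x _. destruct (D_bar (phi1_D x)) as [A1 [B1 C1]].
  destruct (D_bar (phi2_D x)) as [A2 [B2 C2]].
  unfold Tset, phi; simpl. split; [|split].
  + apply Lset_iff. rewrite A1, C1; auto.
  + apply Rset_iff. rewrite A2, B2; auto.
  + congruence.
- intros x y _ _ E. unfold phi in E. injection E as E1 E2.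
  destruct (D_bar (phi1_D x)) as [A1 [B1 C1]].
  destruct (D_bar (phi2_D x)) as [A2 [B2 C2]].
  destruct (D_bar (phi1_D y)) as [A1' [B1' C1']].
  destruct (D_bar (phi2_D y)) as [A2' [B2' C2']].
  rewrite E1 in A1, B1. rewrite E2 in A2, C2.
  destruct (dec_D x) as [_ [_ [_ [Hx _]]]]. destruct (dec_D y) as [_ [_ [_ [Hy _]]]].
  rewrite Hx, Hy. congruence.
- intros [y a] [HL [HR Eb]]. simpl in *.
  apply Lset_iff in HL. apply Rset_iff in HR.
  destruct (dec_D y) as [Hb [He [Hf [Hy [E1 [E2 [E3 E4]]]]]]].
  destruct (dec_D a) as [Hb' [He' [Hf' [Ha [E1' [E2' [E3' E4']]]]]]].
  set (w := barx y) in *. rewrite <- Eb in *.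
  exists (m (m (eex y) w) (ffx a)). split; auto.
  assert (H : D (m (m (eex y) w) (ffx a)) w (eex y) (ffx a)) by (unfold D; repeat split; auto).
  destruct (D_bar H) as [A [B C]]. unfold phi. rewrite A, B, C. f_equal.
  + rewrite HL, <- assoc, st_r in Hy; auto.
  + rewrite HR, pl_l in Ha; auto.
- intros x y _ _. unfold phi, mulT. simpl.
  destruct (D_bar (phi1_D x)) as [A1 [B1 C1]].
  destruct (D_bar (phi2_D y)) as [A2 [B2 C2]].
  rewrite B1, C2.
  assert (H := D_mul (dec_D x) (dec_D y) eq_refl).
  destruct (D_bar H) as [A [B C]]. rewrite A, B, C.
  assert (Sw : S0 (m (m (barx x) (m (ffx x) (eex y))) (barx y))) by (apply qi; apply barS0).
  f_equal.
  + rewrite <- assoc, pl_l; auto. rewrite !assoc. auto.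
  + rewrite assoc, st_r; auto. rewrite !assoc. auto.
Qed.

End A.

Unset Strict Implicit.
Section B.
Variables (X Y : Type) (U : X -> Prop) (V : Y -> Prop) (m : X -> X -> X) (n : Y -> Y -> Y) (phi : X -> Y).
Hypothesis Hiso : iso U m V n phi.
Hypothesis Hcl : forall a b, U a -> U b -> U (m a b).

Lemma tin x : U x -> V (phi x).
Proof. apply Hiso. Qed.
Lemma tinj x y : U x -> U y -> phi x = phi y -> x = y.
Proof. apply Hiso. Qed.
Lemma tsurj z : V z -> exists x, U x /\ phi x = z.
Proof. apply Hiso. Qed.
Lemma thom x y : U x -> U y -> phi (m x y) = n (phi x) (phi y).
Proof. apply Hiso. Qed.

Lemma eq_phi s t : U s -> U t -> (phi s = phi t <-> s = t).
Proof. intros; split; intro; [apply tinj|subst]; auto. Qed.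

Lemma opt_pull (o : option Y) : in1 V o -> exists o', in1 U o' /\ o = option_map phi o'.
Proof. destruct o as [z|]; simpl; intro H.
- destruct (tsurj H) as [x [Hx E]]. exists (Some x); simpl; subst; auto.
- exists None; simpl; auto. Qed.
Lemma in1_phi (o : option X) : in1 U o -> in1 V (option_map phi o).
Proof. destruct o; simpl; auto using tin. Qed.
Lemma in1_cl (o : option X) a : in1 U o -> U a -> U (lact m o a) /\ U (ract m a o).
Proof. destruct o; simpl; auto. Qed.
Lemma lact_phi (o : option X) a : in1 U o -> U a -> lact n (option_map phi o) (phi a) = phi (lact m o a).
Proof. destruct o; simpl; auto. intros; symmetry; apply thom; auto. Qed.
Lemma ract_phi (o : option X) a : in1 U o -> U a -> ract n (phi a) (option_map phi o) = phi (ract m a o).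
Proof. destruct o; simpl; auto. intros; symmetry; apply thom; auto. Qed.

Lemma Rstar_tr a b : U a -> U b -> (Rstar U m a b <-> Rstar V n (phi a) (phi b)).
Proof. intros Ha Hb. split.
- intros H o1 o2 H1 H2.
  destruct (opt_pull H1) as [o1' [H1' E1]]. destruct (opt_pull H2) as [o2' [H2' E2]]. subst.
  rewrite !lact_phi; auto. rewrite !eq_phi; try apply in1_cl; auto.
- intros H o1 o2 H1 H2. specialize (H _ _ (in1_phi H1) (in1_phi H2)).
  rewrite !lact_phi, !eq_phi in H; try apply in1_cl; auto.
Qed.
Lemma Lstar_tr a b : U a -> U b -> (Lstar U m a b <-> Lstar V n (phi a) (phi b)).
Proof. intros Ha Hb. split.
- intros H o1 o2 H1 H2.
  destruct (opt_pull H1) as [o1' [H1' E1]]. destruct (opt_pull H2) as [o2' [H2' E2]]. subst.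
  rewrite !ract_phi; auto. rewrite !eq_phi; try apply in1_cl; auto.
- intros H o1 o2 H1 H2. specialize (H _ _ (in1_phi H1) (in1_phi H2)).
  rewrite !ract_phi, !eq_phi in H; try apply in1_cl; auto.
Qed.
Lemma idem_tr e : U e -> (idem U m e <-> idem V n (phi e)).
Proof. intros He. unfold idem. rewrite <- thom, eq_phi; auto. split; intuition auto using tin. Qed.
Lemma GreenL_tr a b : U a -> U b -> (GreenL U m a b <-> GreenL V n (phi a) (phi b)).
Proof. intros Ha Hb. split.
- intros [u [v [Hu [Hv [E1 E2]]]]]. exists (option_map phi u), (option_map phi v).
  repeat split; auto using in1_phi; rewrite lact_phi; auto; congruence.
- intros [u [v [Hu [Hv [E1 E2]]]]].
  destruct (opt_pull Hu) as [u' [Hu' Eu]]. destruct (opt_pull Hv) as [v' [Hv' Ev]]. subst.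
  rewrite !lact_phi, !eq_phi in *; try apply in1_cl; auto. exists u', v'. auto.
Qed.
Lemma GreenR_tr a b : U a -> U b -> (GreenR U m a b <-> GreenR V n (phi a) (phi b)).
Proof. intros Ha Hb. split.
- intros [u [v [Hu [Hv [E1 E2]]]]]. exists (option_map phi u), (option_map phi v).
  repeat split; auto using in1_phi; rewrite ract_phi; auto; congruence.
- intros [u [v [Hu [Hv [E1 E2]]]]].
  destruct (opt_pull Hu) as [u' [Hu' Eu]]. destruct (opt_pull Hv) as [v' [Hv' Ev]]. subst.
  rewrite !ract_phi, !eq_phi in *; try apply in1_cl; auto. exists u', v'. auto.
Qed.

Lemma semigroup_tr : semigroup U m -> semigroup V n.
Proof. intros [_ Ha]. split.
- intros a b HA HB. destruct (tsurj HA) as [x [Hx E1]]. destruct (tsurj HB) as [y [Hy E2]].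
  subst. rewrite <- thom; auto using tin.
- intros a b c HA HB HC. destruct (tsurj HA) as [x [Hx E1]]. destruct (tsurj HB) as [y [Hy E2]].
  destruct (tsurj HC) as [z [Hz E3]]. subst.
  rewrite <- !thom; auto. rewrite Ha; auto.
Qed.

Lemma abundant_tr : abundant U m -> abundant V n.
Proof. intros H z Hz. destruct (tsurj Hz) as [x [Hx E]]. subst.
  destruct (H x Hx) as [[e [He Re]] [f [Hf Lf]]]. destruct He as [He0 He1]. destruct Hf as [Hf0 Hf1].
  split.
  - exists (phi e). split. apply idem_tr; auto. split; auto. apply Rstar_tr; auto.
  - exists (phi f). split. apply idem_tr; auto. split; auto. apply Lstar_tr; auto.
Qed.
End B.

Section C.
Variables (X Y : Type) (U : X -> Prop) (V : Y -> Prop) (m : X -> X -> X) (n : Y -> Y -> Y) (phi : X -> Y).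
Hypothesis Hiso : iso U m V n phi.
Variable S0 : X -> Prop.
Hypothesis HS : qi_adequate_transversal U m S0.

Definition W := fun z => exists x, S0 x /\ phi x = z.

Lemma S0U x : S0 x -> U x.
Proof. destruct HS as [[_ [_ [[H _] _]]] _]. apply H. Qed.
Lemma Ucl a b : U a -> U b -> U (m a b).
Proof. destruct HS as [[[H _] _] _]. apply H. Qed.
Lemma S0cl a b : S0 a -> S0 b -> S0 (m a b).
Proof. destruct HS as [[_ [_ [[_ [[H _] _]] _]]] _]. apply H. Qed.

Lemma isoW : iso S0 m W n phi.
Proof. destruct Hiso as [H1 [H2 [H3 H4]]]. split; [|split; [|split]].
- intros x Hx. exists x; auto.
- intros x y Hx Hy. apply H2; apply S0U; auto.
- intros z [x [Hx E]]. exists x; auto.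
- intros x y Hx Hy. apply H4; apply S0U; auto.
Qed.

Lemma W_iff b : U b -> (W (phi b) <-> S0 b).
Proof. intro Hb. split.
- intros [b' [Hb' E]]. rewrite <- (tinj Hiso (S0U Hb') Hb E). auto.
- intro H; exists b; auto. Qed.

Lemma decomp_tr x b e f : U x -> U b -> U e -> U f ->
  (decomp U m S0 x b e f <-> decomp V n W (phi x) (phi b) (phi e) (phi f)).
Proof. intros Hx Hb He Hf. unfold decomp.
  rewrite (W_iff Hb), (idem_tr Hiso Ucl He), (idem_tr Hiso Ucl Hf).
  rewrite <- !(thom Hiso), (eq_phi Hiso); auto using Ucl.
  split; intros [A [B [C [D [[p [P1 [P2 P3]]] [q [Q1 [Q2 Q3]]]]]]]]; repeat (split; auto).
  - exists (phi p). assert (Sp : S0 p) by apply P1.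
    rewrite <- (idem_tr isoW S0cl Sp), <- (Rstar_tr isoW S0cl Sp), <- (GreenL_tr Hiso Ucl); auto using S0U.
  - exists (phi q). assert (Sq : S0 q) by apply Q1.
    rewrite <- (idem_tr isoW S0cl Sq), <- (Lstar_tr isoW S0cl Sq), <- (GreenR_tr Hiso Ucl); auto using S0U.
  - destruct P1 as [[p' [Sp E]] P1']. subst p. exists p'.
    rewrite (idem_tr isoW S0cl Sp), (Rstar_tr isoW S0cl Sp), (GreenL_tr Hiso Ucl); auto using S0U.
    split; auto. split; auto. exists p'; auto.
  - destruct Q1 as [[q' [Sq E]] Q1']. subst q. exists q'.
    rewrite (idem_tr isoW S0cl Sq), (Lstar_tr isoW S0cl Sq), (GreenR_tr Hiso Ucl); auto using S0U.
    split; auto. split; auto. exists q'; auto.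
Qed.

Lemma qi_tr : qi_adequate_transversal V n W.
Proof. destruct HS as [[Hsg [Hab [[HsU [Hs0sg [Hs0ab [HL HR]]]] [[_ Hcomm] Hun]]]] Hqi].
  split; [split; [|split; [|split; [|split]]]|].
  - apply (semigroup_tr Hiso Ucl Hsg).
  - apply (abundant_tr Hiso Ucl Hab).
  - split; [|split; [|split; [|split]]].
    + intros z [x [Hx E]]. subst. apply (tin Hiso). auto.
    + apply (semigroup_tr isoW S0cl Hs0sg).
    + apply (abundant_tr isoW S0cl Hs0ab).
    + intros a b [a' [Ha E1]] [b' [Hb E2]]. subst.
      rewrite <- (Lstar_tr isoW S0cl Ha Hb), <- (Lstar_tr Hiso Ucl (S0U Ha) (S0U Hb)). auto.
    + intros a b [a' [Ha E1]] [b' [Hb E2]]. subst.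
      rewrite <- (Rstar_tr isoW S0cl Ha Hb), <- (Rstar_tr Hiso Ucl (S0U Ha) (S0U Hb)). auto.
  - split.
    + apply (abundant_tr isoW S0cl Hs0ab).
    + intros e f Ie If. destruct (proj1 Ie) as [e' [He E1]]. destruct (proj1 If) as [f' [Hf E2]]. subst.
      rewrite <- (idem_tr isoW S0cl He) in Ie. rewrite <- (idem_tr isoW S0cl Hf) in If.
      rewrite <- !(thom isoW); auto. f_equal. apply Hcomm; auto.
  - intros z Hz. destruct (tsurj Hiso Hz) as [x [Hx E]]. subst.
    destruct (Hun x Hx) as [b [[e [f Hd]] Hu]].
    assert (Hb : U b) by (apply S0U; apply Hd).
    assert (He : U e) by apply Hd. assert (Hf : U f) by apply Hd.
    exists (phi b). split.
    + exists (phi e), (phi f). apply decomp_tr; auto.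
    + intros zb [e2 [f2 Hd2]]. pose proof Hd2 as Hd3.
      destruct Hd2 as [[b' [Hb' E]] [[He2 _] [[Hf2 _] _]]]. subst zb.
      destruct (tsurj Hiso He2) as [e' [He' E1]]. destruct (tsurj Hiso Hf2) as [f' [Hf' E2]].
      subst. f_equal. apply Hu. exists e', f'. apply decomp_tr; auto using S0U.

  - intros a s b [a' [Ha E1]] Hs [b' [Hb E2]]. subst.
    destruct (tsurj Hiso Hs) as [s' [Hs' E]]. subst.
    exists (m (m a' s') b'). split; auto.
    rewrite !(thom Hiso); auto using S0U, Ucl.
Qed.
End C.

Theorem proposition2p7 (X : Type) (m : X -> X -> X) (S0 : X -> Prop)
  (HS0 : qi_adequate_transversal (fun _ => True) m S0) :
  let L := Lset (fun _ => True) m S0 in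
  let R := Rset (fun _ => True) m S0 in
  let T := Tset (fun _ => True) m S0 in
  let mT := mulT (fun _ => True) m S0 in
  (semigroup L m /\ left_adequate L m) /\
  (semigroup R m /\ right_adequate R m) /\
  semigroup T mT /\
  (exists phi : X -> X * X, iso (fun _ => True) m T mT phi) /\
  (exists T0 : X * X -> Prop,
     qi_adequate_transversal T mT T0 /\
     exists psi : X -> X * X, iso S0 m T0 mT psi).
Proof.
  intros L R T mT.
  assert (Hiso := phi_iso HS0).
  assert (Hcl : forall a b : X, (fun _ => True) a -> (fun _ => True) b -> (fun _ : X => True) (m a b)) by auto.
  split; [|split; [|split; [|split]]].
  - apply L_left_adequate; auto.
  - apply R_right_adequate; auto.
  - apply (semigroup_tr Hiso Hcl). apply HS0.
  - exists (phi m S0). exact Hiso.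
  - exists (W (phi m S0) S0). split.
    + apply (qi_tr Hiso HS0).
    + exists (phi m S0). apply (isoW Hiso HS0).
Qed.
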